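(* Let $A$ and $B$ be rings, $f: A\to B$ a ring homomorphism and $J$ a proper ideal of $B$. Then: (1) If $A\bowtie^{f}J$ is a weak Armendariz ring, then $A$ is a weak Armendariz ring. (2) If $A$ and $f(A)+J$ are weak Armendariz rings, then $A\bowtie^{f}J$ is a weak Armendariz ring.
   Context: All rings are associative with identity (not necessarily commutative), ring homomorphisms are unital, and ideals are two-sided. $\mathrm{nil}(R)$ denotes the set of nilpotent elements of a ring $R$. For a ring homomorphism $f:A\to B$ and an ideal $J$ of $B$, the amalgamation is the subring $A\bowtie^{f}J=\{(a,f(a)+j)\mid a\in A,\ j\in J\}$ of $A\times B$; $f(A)+J=\{f(a)+j: a\in A, j\in J\}$ is a subring of $B$. A ring $R$ is weak Armendariz if whenever $p(x)=\sum_{i=0}^n a_ix^i$ and $q(x)=\sum_{j=0}^m b_jx^j$ in $R[x]$ satisfy $p(x)q(x)=0$, then $a_ib_j\in\mathrm{nil}(R)$ for all $i,j$. *)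

(* Defs.v *)
From HB Require Import structures.
From mathcomp Require Import all_boot all_order all_algebra.
Set Implicit Arguments. Unset Strict Implicit. Unset Printing Implicit Defensive.
Import GRing.Theory.
Local Open Scope ring_scope.

Definition is_nilpotent {R : nzRingType} (x : R) : Prop := exists n : nat, x ^+ n = 0.

Definition two_sided_ideal {R : nzRingType} (J : R -> Prop) : Prop :=
  [/\ J 0,
      (forall x y, J x -> J y -> J (x + y)),
      (forall x, J x -> J (- x)),
      (forall r x, J x -> J (r * x)) &
      (forall r x, J x -> J (x * r))].

Definition proper_two_sided_ideal {R : nzRingType} (J : R -> Prop) : Prop :=
  two_sided_ideal J /\ ~ J 1.

Definition weak_armendariz (R : nzRingType) : Prop :=
  forall p q : {poly R}, p * q = 0 ->
    forall i j : nat, is_nilpotent (p`_i * q`_j).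

(* Weak Armendariz property of a subring S of R (given as a predicate):
   polynomials in S[x] are polynomials of R[x] with all coefficients in S;
   their product in S[x] is their product in R[x], and nilpotency in S is
   nilpotency in R. *)
Definition weak_armendariz_sub {R : nzRingType} (S : R -> Prop) : Prop :=
  forall p q : {poly R}, (forall i, S p`_i) -> (forall j, S q`_j) ->
    p * q = 0 -> forall i j : nat, is_nilpotent (p`_i * q`_j).

Definition amalg {A B : nzRingType} (f : {rmorphism A -> B}) (J : B -> Prop)
  : A * B -> Prop :=
  fun x => exists a j, J j /\ x = (a, f a + j).

Definition fAJ {A B : nzRingType} (f : {rmorphism A -> B}) (J : B -> Prop)
  : B -> Prop :=
  fun b => exists a j, J j /\ b = f a + j.

(* Main.v *)
Require Import Defs.
From HB Require Import structures.
From mathcomp Require Import all_boot all_order all_algebra.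
Local Open Scope ring_scope.
Import GRing.Theory.

Section Diag.
Variables (A B : nzRingType) (f : {rmorphism A -> B}).
Definition diagf (a : A) : (A * B)%type := (a, f a).
Fact diagf_zmod : zmod_morphism diagf.
Proof. by move=> x y; rewrite /diagf rmorphB. Qed.
Fact diagf_mon : monoid_morphism diagf.
Proof. by split; rewrite /diagf ?rmorph1 // => x y; rewrite rmorphM. Qed.
HB.instance Definition _ := GRing.isZmodMorphism.Build A (A * B)%type diagf diagf_zmod.
HB.instance Definition _ := GRing.isMonoidMorphism.Build A (A * B)%type diagf diagf_mon.
End Diag.

Lemma pairX (A B : nzRingType) (x : (A * B)%type) n : x ^+ n = (x.1 ^+ n, x.2 ^+ n).
Proof.
elim: n => [|n IH]; first by rewrite !expr0.
by rewrite !exprS IH.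
Qed.

Lemma nil_plus (R : nzRingType) (x : R) n m : x ^+ n = 0 -> x ^+ (n + m) = 0.
Proof. by move=> h; rewrite exprD h mul0r. Qed.

Theorem theorem4p1 (A B : nzRingType) (f : {rmorphism A -> B}) (J : B -> Prop) :
  proper_two_sided_ideal J ->
  (weak_armendariz_sub (amalg f J) -> weak_armendariz A) /\
  (weak_armendariz A -> weak_armendariz_sub (fAJ f J) ->
     weak_armendariz_sub (amalg f J)).
Proof.
move=> [[J0 _ _ _ _] _]; split.
- move=> H p q pq i j.
  have hp : forall k, amalg f J (map_poly (@diagf _ _ f) p)`_k.
    by move=> k; exists p`_k, 0; rewrite coef_map /= addr0.
  have hq : forall k, amalg f J (map_poly (@diagf _ _ f) q)`_k.
    by move=> k; exists q`_k, 0; rewrite coef_map /= addr0.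
  have e : map_poly (@diagf _ _ f) p * map_poly (@diagf _ _ f) q = 0.
    by rewrite -rmorphM pq rmorph0.
  have [n] := H _ _ hp hq e i j.
  rewrite !coef_map /= pairX => [[e1 _]]; by exists n.
- move=> HA HB P Q HP HQ PQ i j.
  have e1 : map_poly fst P * map_poly fst Q = 0.
    by rewrite -rmorphM PQ rmorph0.
  have [n hn] := HA _ _ e1 i j.
  have hp : forall k, fAJ f J (map_poly snd P)`_k.
    move=> k; rewrite coef_map /=; have [a [b [Jb ->]]] := HP k.
    by exists a, b.
  have hq : forall k, fAJ f J (map_poly snd Q)`_k.
    move=> k; rewrite coef_map /=; have [a [b [Jb ->]]] := HQ k.
    by exists a, b.
  have e2 : map_poly snd P * map_poly snd Q = 0.
    by rewrite -rmorphM PQ rmorph0.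
  have [m hm] := HB _ _ hp hq e2 i j.
  exists (n + m)%N; rewrite pairX.
  rewrite !coef_map /= in hn hm.
  by rewrite (@nil_plus _ _ _ m hn) addnC (@nil_plus _ _ _ n hm).
Qed.
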